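(* Let $f_{SH}(x)=\sqrt{\frac{x^2+1}{2}}-\frac{2x}{x+1}$ for $x\in(0,\infty)$, let $f_{SH}^*(u)=u\,f_{SH}\!\left(\frac{1-u}{u}\right)$ for $u\in(0,1)$, extended by continuity to $[0,1]$ (explicitly $f_{SH}^*(u)=\frac{\sqrt2}{2}\sqrt{u^2+(1-u)^2}-2u(1-u)$), and define $\overline M_{SH}(C_1,C_2)=E_X\{f_{SH}^*(P(C_2\mid x))\}$. Then $$P_e\le \frac12\left[1-\frac{2}{\sqrt2}\,\overline M_{SH}(C_1,C_2)\right].$$
   Context: Two-class decision problem: classes $C_1,C_2$, an observation $x$ in a space $\mathrm X$ with density $p(x)$, and a posteriori probabilities $P(C_1\mid x),P(C_2\mid x)\ge0$ with $P(C_1\mid x)+P(C_2\mid x)=1$. $E_X\{g(x)\}=\int_{\mathrm X} g(x)p(x)\,dx$. $P_e=E_X\{\min(P(C_1\mid x),P(C_2\mid x))\}$ is the Bayesian probability of error. *)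

(* Defs.v *)
From HB Require Import structures.
From mathcomp Require Import all_boot all_order all_algebra.
From mathcomp Require Import all_classical all_reals all_analysis.
Set Implicit Arguments. Unset Strict Implicit. Unset Printing Implicit Defensive.
Import Order.TTheory GRing.Theory Num.Theory.
Local Open Scope ring_scope.

Definition fSH {R : realType} (x : R) : R :=
  Num.sqrt ((x ^+ 2 + 1) / 2) - (2 * x) / (x + 1).

Definition fSHstar {R : realType} (u : R) : R :=
  if (0 < u) && (u < 1) then u * fSH ((1 - u) / u)
  else Num.sqrt 2 / 2 * Num.sqrt (u ^+ 2 + (1 - u) ^+ 2) - 2 * u * (1 - u).

(* Main.v *)
Require Import Defs.
From HB Require Import structures.
From mathcomp Require Import all_boot all_order all_algebra.
From mathcomp Require Import all_classical all_reals all_analysis.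
From mathcomp Require Import ring lra.
From mathcomp Require Import measurable_realfun.
Import Order.TTheory GRing.Theory Num.Theory.
Local Open Scope ring_scope.

Definition hh {R : realType} (u : R) : R :=
  Num.sqrt 2 / 2 * Num.sqrt (u ^+ 2 + (1 - u) ^+ 2) - 2 * u * (1 - u).

Lemma fSHstar_hh {R : realType} (u : R) : 0 <= u <= 1 -> fSHstar u = hh u.
Proof.
move=> /andP[u0 u1]. rewrite /fSHstar /hh.
case: ifP => // /andP[up ul].
have une : u != 0 by rewrite gt_eqF.
rewrite /fSH mulrBr.
have -> : (1 - u) / u + 1 = u^-1 by field.
have -> : u * (2 * ((1 - u) / u) / u^-1) = 2 * u * (1 - u) by field.
congr (_ - _).
have A0 : 0 <= u * Num.sqrt ((((1 - u) / u) ^+ 2 + 1) / 2).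
  by apply: mulr_ge0; [lra|apply: sqrtr_ge0].
have B0 : 0 <= Num.sqrt 2 / 2 * Num.sqrt (u ^+ 2 + (1 - u) ^+ 2).
  by apply: mulr_ge0; [apply: mulr_ge0; [apply: sqrtr_ge0|lra]|apply: sqrtr_ge0].
apply/eqP; rewrite -(@eqrXn2 _ 2) //.
rewrite !exprMn !sqr_sqrtr //.
- by apply/eqP; field.
- by apply: addr_ge0; apply: sqr_ge0.
- apply: divr_ge0; last lra. apply: addr_ge0; last lra.
  rewrite -exprMn; apply: sqr_ge0.
Qed.

Lemma hh_bound {R : realType} (u : R) : 0 <= u <= 1 -> `|hh u| <= 1.
Proof.
move=> /andP[u0 u1]. rewrite /hh.
set r := Num.sqrt 2. set s := Num.sqrt _.
have r2 : r ^+ 2 = 2 by rewrite sqr_sqrtr.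
have r0 : 0 <= r by apply: sqrtr_ge0.
have s0 : 0 <= s by apply: sqrtr_ge0.
have s2 : s ^+ 2 = u ^+ 2 + (1 - u) ^+ 2 by rewrite sqr_sqrtr //; nra.
have s1 : s <= 1 by nra.
have r1 : r <= 2 by nra.
have rs : r / 2 * s <= 1 by nra.
have rs0 : 0 <= r / 2 * s by apply: mulr_ge0 => //; lra.
rewrite ler_norml; apply/andP; split; nra.
Qed.

Lemma sqrt2_facts {R : realType} :
  Num.sqrt (2:R) ^+ 2 = 2 /\ 1 <= Num.sqrt (2:R) /\ 2 / Num.sqrt (2:R) = Num.sqrt (2:R).
Proof.
set r := Num.sqrt (2:R). have r2 : r ^+ 2 = 2 by rewrite sqr_sqrtr.
have r0 : 0 <= r by apply: sqrtr_ge0.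
have r1 : 1 <= r by nra.
split=> //; split=> //.
have rne : r != 0 by apply/eqP => h; rewrite h in r1; lra.
apply: (mulIf rne). by rewrite divfK // -expr2 r2.
Qed.

Lemma key {R : realType} (u : R) : 0 <= u <= 1 ->
  Num.min (1 - u) u <= 1 / 2 * (1 - 2 / Num.sqrt 2 * hh u).
Proof.
move=> /andP[u0 u1].
rewrite /hh.
set r := Num.sqrt 2.
have [r2 [r1 rc]] : r ^+ 2 = 2 /\ 1 <= r /\ 2 / r = r := sqrt2_facts.
rewrite rc.
set s := Num.sqrt _.
have s0 : 0 <= s by apply: sqrtr_ge0.
have s2 : s ^+ 2 = u ^+ 2 + (1 - u) ^+ 2 by rewrite sqr_sqrtr //; nra.
set a := u * (1 - u).
have [m [m0 [m1 [em ea]]]] : exists m, 0 <= m /\ m <= 1/2 /\ Num.min (1 - u) u = m /\ a = m * (1 - m).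
  case: (leP u (1/2)) => hu.
  - exists u; split => //; split => //; split => //. by apply/min_idPr; lra.
  - exists (1 - u); split; first lra; split; first lra; split.
      by apply/min_idPl; lra.
    rewrite /a; ring.
rewrite em.
set t := 1 - 2 * m.
have t0 : 0 <= t by rewrite /t; lra.
have t1 : t <= 1 by rewrite /t; lra.
set Rr := t + 2 * r * a.
have a0 : 0 <= a by rewrite ea; nra.
have ra0 : 0 <= r * a.
  apply: mulr_ge0 => //; lra.
have R0 : 0 <= Rr by rewrite /Rr; lra.
have hsq : s ^+ 2 <= Rr ^+ 2.
  have tt : t ^+ 2 = 1 - 4 * a by rewrite /t ea; ring.
  have ss : s ^+ 2 = 1 - 2 * a by rewrite s2 /a; ring.
  have d : Rr ^+ 2 - s ^+ 2 = 2 * a * t * (2 * r - t).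
    have -> : Rr ^+ 2 = t ^+ 2 + 4 * r * a * t + 4 * r ^+ 2 * a ^+ 2 by rewrite /Rr; ring.
    rewrite tt r2 ss. have -> : 2 * a * t * (2 * r - t) = 4 * r * a * t - 2 * a * t ^+ 2 by ring.
    rewrite tt; ring.
  have : 0 <= 2 * a * t * (2 * r - t).
    apply: mulr_ge0; last lra. apply: mulr_ge0 => //. apply: mulr_ge0 => //; lra.
  lra.
have sR : s <= Rr by nra.
rewrite /Rr /t in sR.
have -> : r * (r / 2 * s - 2 * u * (1 - u)) = r ^+ 2 / 2 * s - 2 * r * a by rewrite /a; ring.
rewrite r2 divff ?mul1r; last by rewrite pnatr_eq0.
lra.
Qed.

Lemma mhh {R : realType} : measurable_fun setT (@hh R).
Proof.
rewrite /hh. apply: measurable_funB.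
  apply: measurable_funM; first exact: measurable_cst.
  apply: measurableT_comp; first exact: continuous_measurable_fun (@sqrt_continuous R).
  apply: measurable_funD; first exact: measurable_funX.
  apply: measurable_funX; apply: measurable_funB => //; exact: measurable_cst.
apply: measurable_funM; last by apply: measurable_funB => //; exact: measurable_cst.
apply: measurable_funM => //; exact: measurable_cst.
Qed.

Local Open Scope ereal_scope.

Theorem mainTheorem6 (d : measure_display) (X : measurableType d) (R : realType)
  (mu : {measure set X -> \bar R}) (p P1 P2 : X -> R)
  (mp : measurable_fun setT p) (p_ge0 : forall x, (0 <= p x)%R)
  (p_int : \int[mu]_x (p x)%:E = 1)
  (mP1 : measurable_fun setT P1) (mP2 : measurable_fun setT P2)
  (P1_ge0 : forall x, (0 <= P1 x)%R) (P2_ge0 : forall x, (0 <= P2 x)%R)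
  (P12 : forall x, (P1 x + P2 x = 1)%R) :
  \int[mu]_x (Num.min (P1 x) (P2 x) * p x)%:E
  <= (1 / 2)%:E *
     (1 - (2 / Num.sqrt 2)%:E * \int[mu]_x (fSHstar (P2 x) * p x)%:E).
Proof.
have P2b x : (0 <= P2 x <= 1)%R.
  by apply/andP; split => //; have := P12 x; have := P1_ge0 x; lra.
have eF : (fun x => (fSHstar (P2 x) * p x)%:E) = (fun x => (hh (P2 x) * p x)%:E).
  by apply: funext => x; rewrite fSHstar_hh.
have eM : (fun x => (Num.min (P1 x) (P2 x) * p x)%:E) =
          (fun x => (Num.min (1 - P2 x) (P2 x) * p x)%:E).
  by apply: funext => x; have -> : P1 x = (1 - P2 x)%R by have := P12 x; lra.
rewrite eF eM.
set c := (2 / Num.sqrt 2)%R.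
have mhP : measurable_fun setT (fun x => hh (P2 x)) by exact: measurableT_comp mhh mP2.
have ip : mu.-integrable setT (EFin \o p).
  apply/integrableP; split; first exact/measurable_EFinP.
  under eq_integral do rewrite /= ger0_norm //.
  by rewrite p_int ltry.
have ihp : mu.-integrable setT (EFin \o (fun x => hh (P2 x) * p x)%R).
  apply: (le_integrable _ _ _ ip) => //.
    by apply/measurable_EFinP; exact: measurable_funM.
  move=> x _ /=; rewrite lee_fin normrM (ger0_norm (p_ge0 x)).
  by rewrite ler_piMl //; have := @hh_bound _ _ (P2b x); lra.
apply: (@le_trans _ _ (\int[mu]_x ((1 / 2 * p x)%:E - ((1 / 2 * c) * (hh (P2 x) * p x))%:E))).
  apply: ge0_le_integral => //.
  - by move=> x _; rewrite lee_fin; apply: mulr_ge0 => //; rewrite le_min; apply/andP; split; have := P2b x; lra.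
  - apply/measurable_EFinP; apply: measurable_funM => //; apply: measurable_minr => //.
    by apply: measurable_funB => //; exact: measurable_cst.
  - apply: emeasurable_funB; apply/measurable_EFinP.
      by apply: measurable_funM => //; exact: measurable_cst.
    apply: measurable_funM; first exact: measurable_cst.
    exact: measurable_funM.
  - move=> x _; rewrite -EFinB lee_fin.
    have := @key _ _ (P2b x). have := p_ge0 x. rewrite -/c => p0 hk.
    have -> : (1 / 2 * p x - 1 / 2 * c * (hh (P2 x) * p x) = (1 / 2 * (1 - c * hh (P2 x))) * p x)%R by ring.
    by apply: ler_wpM2r.
rewrite integralB_EFin //; last first.
  have -> : EFin \o (fun x => (1 / 2 * c * (hh (P2 x) * p x))%R) =
            (fun x => (1 / 2 * c)%:E * (EFin \o (fun x => hh (P2 x) * p x)%R) x).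
    by apply: funext => x; rewrite /= EFinM.
  exact: integrableZl.
  have -> : EFin \o (fun x => (1 / 2 * p x)%R) =
            (fun x => (1 / 2)%:E * (EFin \o p) x).
    by apply: funext => x; rewrite /= EFinM.
  exact: integrableZl.
have -> : \int[mu]_x (1 / 2 * p x)%:E = (1 / 2)%:E.
  under eq_integral do rewrite EFinM.
  by rewrite integralZl // p_int mule1.
have -> : \int[mu]_x (1 / 2 * c * (hh (P2 x) * p x))%:E =
          (1 / 2 * c)%:E * \int[mu]_x (hh (P2 x) * p x)%:E.
  under eq_integral do rewrite EFinM.
  by rewrite integralZl.
have If := integrable_fin_num measurableT ihp.
rewrite -(fineK If).
set I := fine _.
rewrite -!EFinM -!EFinB lee_fin.
rewrite le_eqVlt; apply/orP; left; apply/eqP; ring.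
Qed.
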